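(* Let $X=\{\{k\}:k\in\mathbb{Z}\}\cup\{\{k,k+1\}:k\in\mathbb{Z}\}$ be the infinite $1$-dimensional simplicial complex of the integer line. Consider the operators $L$ and $|H|$ on $\ell^2(X)$, defined in the context. Then $L$ is a bounded operator, it is invertible with bounded inverse $L^{-1}$, and $$|H|=L-L^{-1}.$$
   Context: The operator $L$ on $\ell^2(X)$ is given by the matrix $L(x,y)=1$ if $x\cap y\neq\emptyset$ and $L(x,y)=0$ otherwise, for $x,y\in X$. The sign-less exterior derivative $|d|$ is given by the matrix $|d|(x,y)=1$ if $y\subset x$ and $|x|=|y|+1$, and $0$ otherwise. The operator $|H|$ is defined as $|H|=(|d|+|d|^* )^2$. All matrices have finitely many nonzero entries in each row and column, with uniformly bounded entries. *)

(* Defs.v *)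
From Stdlib Require Import Reals ZArith List Bool.
Open Scope R_scope.

(* The simplices of the integer line: X = {{k}} ∪ {{k,k+1}}, k ∈ Z. *)
Inductive simplex : Type :=
| Vtx (k : Z)
| Edg (k : Z).

Definition verts (x : simplex) : list Z :=
  match x with
  | Vtx k => k :: nil
  | Edg k => k :: (k + 1)%Z :: nil
  end.

Definition memb (z : Z) (x : simplex) : bool := existsb (Z.eqb z) (verts x).

Definition card (x : simplex) : nat := length (verts x).

Definition meets (x y : simplex) : bool := existsb (fun z => memb z y) (verts x).

Definition subsetb (y x : simplex) : bool := forallb (fun z => memb z x) (verts y).

Definition Lmat (x y : simplex) : R := if meets x y then 1 else 0.

Definition absd (x y : simplex) : R :=
  if subsetb y x && Nat.eqb (card x) (S (card y)) then 1 else 0.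

(* |d| + adjoint of |d| (the adjoint of a real matrix is its transpose) *)
Definition Dmat (x y : simplex) : R := absd x y + absd y x.

(* Enumeration of X by Z (a bijection): even n -> {n/2}, odd n -> {(n-1)/2,(n+1)/2}. *)
Definition enum (n : Z) : simplex :=
  if Z.odd n then Edg (Z.div2 n) else Vtx (Z.div2 n).

Definition zsum (g : Z -> R) (N : nat) : R :=
  sum_f_R0 (fun i => g (Z.of_nat i - Z.of_nat N)%Z) (2 * N).

Definition psum2 (f : simplex -> R) (N : nat) : R :=
  zsum (fun n => (f (enum n))²) N.

(* f ∈ ℓ^2(X): nonnegative series with bounded partial sums *)
Definition is_l2 (f : simplex -> R) : Prop := exists B, forall N, psum2 f N <= B.

Definition op := (simplex -> R) -> (simplex -> R).

(* T is a bounded (linear) operator on ℓ^2(X):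
   linear on ℓ^2, and ||T f||^2 <= C ||f||^2, where ||f||^2 = sup_N psum2 f N. *)
Definition bounded_op (T : op) : Prop :=
  (forall f g a, is_l2 f -> is_l2 g ->
     forall x, T (fun y => a * f y + g y) x = a * T f x + T g x) /\
  exists C, 0 <= C /\
    forall f B, (forall N, psum2 f N <= B) -> forall N, psum2 (T f) N <= C * B.

Definition mx_acts (M : simplex -> simplex -> R) (f g : simplex -> R) : Prop :=
  forall x, Un_cv (zsum (fun n => M x (enum n) * f (enum n))) (g x).

(* Main.v *)
Require Import Defs.
From Stdlib Require Import Reals Lra Lia ZArith List Bool.
Open Scope R_scope.

Lemma zsum_ext g h N : (forall n, g n = h n) -> zsum g N = zsum h N.
Proof. intros H; unfold zsum; apply sum_eq; intros; apply H. Qed.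

Lemma zsum_plus g h N : zsum (fun n => g n + h n) N = zsum g N + zsum h N.
Proof. unfold zsum; apply plus_sum. Qed.

Lemma sum_ind_zero c m K : (K < m)%nat ->
  sum_f_R0 (fun i => if Nat.eqb i m then c else 0) K = 0.
Proof.
  induction K; intros H; cbn [sum_f_R0].
  - destruct (Nat.eqb_spec 0 m); [lia|reflexivity].
  - rewrite IHK by lia. destruct (Nat.eqb_spec (S K) m); [lia|ring].
Qed.

Lemma sum_ind c m K : (m <= K)%nat ->
  sum_f_R0 (fun i => if Nat.eqb i m then c else 0) K = c.
Proof.
  induction K; intros H; cbn [sum_f_R0].
  - destruct (Nat.eqb_spec 0 m); [reflexivity|lia].
  - destruct (Nat.eqb_spec (S K) m).
    + rewrite sum_ind_zero by lia. ring.
    + rewrite IHK by lia. ring.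
Qed.

Lemma zsum_point p c N : (Z.abs p <= Z.of_nat N)%Z ->
  zsum (fun n => if Z.eqb n p then c else 0) N = c.
Proof.
  intros H. unfold zsum.
  rewrite (sum_eq _ (fun i => if Nat.eqb i (Z.to_nat (p + Z.of_nat N)) then c else 0)).
  - apply sum_ind. lia.
  - intros i _. destruct (Z.eqb_spec (Z.of_nat i - Z.of_nat N) p);
    destruct (Nat.eqb_spec i (Z.to_nat (p + Z.of_nat N))); try reflexivity; lia.
Qed.

Lemma cv_eventually (u : nat -> R) c N0 : (forall N, (N >= N0)%nat -> u N = c) -> Un_cv u c.
Proof.
  intros H eps Heps. exists N0. intros n Hn. rewrite H by lia.
  unfold Rdist. rewrite Rminus_diag, Rabs_R0. lra.
Qed.

Lemma Un_cv_eq (u v : nat -> R) l : (forall N, u N = v N) -> Un_cv v l -> Un_cv u l.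
Proof. intros E H eps He. destruct (H eps He) as [N HN]. exists N. intros. rewrite E. auto. Qed.

Lemma cv_point p c : Un_cv (zsum (fun n => if Z.eqb n p then c else 0)) c.
Proof.
  apply (cv_eventually _ _ (Z.to_nat (Z.abs p))). intros N HN. apply zsum_point. lia.
Qed.

Lemma cv_zero : Un_cv (zsum (fun _ => 0)) 0.
Proof.
  apply (cv_eventually _ _ 0). intros N _. unfold zsum. rewrite sum_cte. ring.
Qed.

Definition seqb (a b : simplex) : bool :=
  match a, b with
  | Vtx i, Vtx j => Z.eqb i j
  | Edg i, Edg j => Z.eqb i j
  | _, _ => false
  end.

Definition idx (z : simplex) : Z :=
  match z with Vtx k => (2 * k)%Z | Edg k => (2 * k + 1)%Z end.

Lemma enum_even k : enum (2 * k) = Vtx k.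
Proof.
  unfold enum. rewrite Z.odd_mul. change (Z.odd 2 && Z.odd k) with false. cbv iota. f_equal.
  pose proof (Z.div2_odd (2*k)) as H. rewrite Z.odd_mul in H. change (Z.b2z (Z.odd 2 && Z.odd k)) with 0%Z in H. lia.
Qed.

Lemma enum_odd k : enum (2 * k + 1) = Edg k.
Proof.
  unfold enum. rewrite Z.odd_add, Z.odd_mul. change (xorb (Z.odd 2 && Z.odd k) (Z.odd 1)) with true. cbv iota. f_equal.
  pose proof (Z.div2_odd (2*k+1)) as H. rewrite Z.odd_add, Z.odd_mul in H. change (Z.b2z (xorb (Z.odd 2 && Z.odd k) (Z.odd 1))) with 1%Z in H. lia.
Qed.

Lemma enum_idx z : enum (idx z) = z.
Proof. destruct z; simpl; [apply enum_even|apply enum_odd]. Qed.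

Lemma seqb_enum n z : seqb (enum n) z = Z.eqb n (idx z).
Proof.
  pose proof (Z.div2_odd n) as Hn. unfold enum.
  destruct (Z.odd n); [change (Z.b2z true) with 1%Z in Hn|change (Z.b2z false) with 0%Z in Hn];
  destruct z as [k|k]; unfold seqb, idx;
  try (destruct (Z.eqb_spec (Z.div2 n) k)); try destruct (Z.eqb_spec n (2*k)%Z) ;
  try destruct (Z.eqb_spec n (2*k+1)%Z); try reflexivity; lia.
Qed.

Fixpoint ind (l : list simplex) (y : simplex) : R :=
  match l with nil => 0 | z :: l => (if seqb y z then 1 else 0) + ind l y end.

Fixpoint sumf (l : list simplex) (f : simplex -> R) : R :=
  match l with nil => 0 | z :: l => f z + sumf l f end.

Lemma cv_ind l f : Un_cv (zsum (fun n => ind l (enum n) * f (enum n))) (sumf l f).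
Proof.
  induction l as [|z l IH]; simpl.
  - eapply Un_cv_eq; [|apply cv_zero]. intros N. apply zsum_ext. intros; ring.
  - eapply Un_cv_eq; [|apply CV_plus; [apply (cv_point (idx z) (f z))|apply IH]].
    intros N. simpl. rewrite <- zsum_plus. apply zsum_ext. intros n.
    rewrite seqb_enum. destruct (Z.eqb_spec n (idx z)).
    + subst. rewrite enum_idx. ring.
    + ring.
Qed.

Lemma mx_acts_ind M nb f g :
  (forall x y, M x y = ind (nb x) y) -> (forall x, g x = sumf (nb x) f) -> mx_acts M f g.
Proof.
  intros HM Hg x. rewrite Hg. eapply Un_cv_eq; [|apply cv_ind].
  intros N. apply zsum_ext. intros n. rewrite HM. reflexivity.
Qed.

Definition nbrL (x : simplex) : list simplex :=
  match x with
  | Vtx k => Vtx k :: Edg (k-1) :: Edg k :: nil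
  | Edg k => Edg k :: Vtx k :: Vtx (k+1) :: Edg (k-1) :: Edg (k+1) :: nil
  end%Z.

Definition nbrD (x : simplex) : list simplex :=
  match x with
  | Vtx k => Edg (k-1) :: Edg k :: nil
  | Edg k => Vtx k :: Vtx (k+1) :: nil
  end%Z.

Ltac zcases :=
  repeat match goal with |- context [Z.eqb ?a ?b] => destruct (Z.eqb_spec a b) end;
  simpl; first [lra | exfalso; lia].

Lemma Lmat_ind x y : Lmat x y = ind (nbrL x) y.
Proof.
  destruct x as [k|k]; destruct y as [j|j];
  unfold Lmat, meets, memb, verts; simpl; zcases.
Qed.

Lemma Dmat_ind x y : Dmat x y = ind (nbrD x) y.
Proof.
  destruct x as [k|k]; destruct y as [j|j];
  unfold Dmat, absd, subsetb, card, memb, verts; simpl; zcases.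
Qed.

Definition Lop : op := fun f x => sumf (nbrL x) f.
Definition Linv : op := fun f x =>
  match x with
  | Vtx k => - f (Vtx k) - f (Vtx (k-1)%Z) - f (Vtx (k+1)%Z) + f (Edg (k-1)%Z) + f (Edg k)
  | Edg k => - f (Edg k) + f (Vtx k) + f (Vtx (k+1)%Z)
  end.

Ltac znorm := rewrite ?Z.sub_add, ?Z.add_simpl_r.

Lemma LLinv f x : Lop (Linv f) x = f x.
Proof. destruct x; unfold Lop, Linv; simpl; znorm; ring. Qed.
Lemma LinvL f x : Linv (Lop f) x = f x.
Proof. destruct x; unfold Lop, Linv; simpl; znorm; ring. Qed.
Lemma DD f x : sumf (nbrD x) (fun y => sumf (nbrD y) f) = Lop f x - Linv f x.
Proof. destruct x; unfold Lop, Linv; simpl; znorm; ring. Qed.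

Lemma sq5 a b c d e : (a+b+c+d+e)² <= 5 * (a² + b² + c² + d² + e²).
Proof.
  unfold Rsqr.
  assert (0 <= (a-b)*(a-b) + (a-c)*(a-c) + (a-d)*(a-d) + (a-e)*(a-e) + (b-c)*(b-c)
     + (b-d)*(b-d) + (b-e)*(b-e) + (c-d)*(c-d) + (c-e)*(c-e) + (d-e)*(d-e)).
  { repeat apply Rplus_le_le_0_compat; apply Rle_0_sqr. }
  nra.
Qed.

Definition W (f : simplex -> R) (n : Z) : R :=
  (f (enum (n + -2))%Z)² + (f (enum (n + -1))%Z)² + (f (enum (n + 0))%Z)²
  + (f (enum (n + 1))%Z)² + (f (enum (n + 2))%Z)².

Lemma parity n : exists k, n = (2*k)%Z \/ n = (2*k+1)%Z.
Proof.
  pose proof (Z.div2_odd n) as Hn. exists (Z.div2 n).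
  destruct (Z.odd n); [right; change (Z.b2z true) with 1%Z in Hn|left; change (Z.b2z false) with 0%Z in Hn]; lia.
Qed.

Lemma Lop_pt f n : (Lop f (enum n))² <= 5 * W f n.
Proof.
  destruct (parity n) as [k [-> | ->]]; unfold W.
  - replace (2*k + -2)%Z with (2*(k-1))%Z by lia.
    replace (2*k + -1)%Z with (2*(k-1)+1)%Z by lia.
    replace (2*k + 0)%Z with (2*k)%Z by lia.
    replace (2*k + 2)%Z with (2*(k+1))%Z by lia.
    rewrite !enum_even, !enum_odd. unfold Lop; simpl.
    pose proof (sq5 0 (f (Edg (k-1)%Z)) (f (Vtx k)) (f (Edg k)) 0).
    unfold Rsqr in *. nra.
  - replace (2*k + 1 + -2)%Z with (2*(k-1)+1)%Z by lia.
    replace (2*k + 1 + -1)%Z with (2*k)%Z by lia.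
    replace (2*k + 1 + 0)%Z with (2*k+1)%Z by lia.
    replace (2*k + 1 + 1)%Z with (2*(k+1))%Z by lia.
    replace (2*k + 1 + 2)%Z with (2*(k+1)+1)%Z by lia.
    rewrite !enum_even, !enum_odd. unfold Lop; simpl.
    pose proof (sq5 (f (Edg (k-1)%Z)) (f (Vtx k)) (f (Edg k)) (f (Vtx (k+1)%Z)) (f (Edg (k+1)%Z))).
    unfold Rsqr in *. nra.
Qed.

Lemma Linv_pt f n : (Linv f (enum n))² <= 5 * W f n.
Proof.
  destruct (parity n) as [k [-> | ->]]; unfold W.
  - replace (2*k + -2)%Z with (2*(k-1))%Z by lia.
    replace (2*k + -1)%Z with (2*(k-1)+1)%Z by lia.
    replace (2*k + 0)%Z with (2*k)%Z by lia.
    replace (2*k + 2)%Z with (2*(k+1))%Z by lia.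
    rewrite !enum_even, !enum_odd. unfold Linv; simpl.
    pose proof (sq5 (- f (Vtx (k-1)%Z)) (f (Edg (k-1)%Z)) (- f (Vtx k)) (f (Edg k)) (- f (Vtx (k+1)%Z))).
    unfold Rsqr in *. nra.
  - replace (2*k + 1 + -2)%Z with (2*(k-1)+1)%Z by lia.
    replace (2*k + 1 + -1)%Z with (2*k)%Z by lia.
    replace (2*k + 1 + 0)%Z with (2*k+1)%Z by lia.
    replace (2*k + 1 + 1)%Z with (2*(k+1))%Z by lia.
    replace (2*k + 1 + 2)%Z with (2*(k+1)+1)%Z by lia.
    rewrite !enum_even, !enum_odd. unfold Linv; simpl.
    pose proof (sq5 0 (f (Vtx k)) (- f (Edg k)) (f (Vtx (k+1)%Z)) 0).
    unfold Rsqr in *. nra.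
Qed.

Lemma term_le_sum h j : (forall n, 0 <= h n) -> h j <= sum_f_R0 h j.
Proof.
  intros Hp. destruct j; simpl; [lra|].
  pose proof (cond_pos_sum h j Hp). lra.
Qed.

Lemma sum_mono h K d : (forall n, 0 <= h n) -> sum_f_R0 h K <= sum_f_R0 h (K + d).
Proof.
  intros Hp. induction d.
  - rewrite Nat.add_0_r; lra.
  - replace (K + S d)%nat with (S (K + d)) by lia. simpl. pose proof (Hp (S (K+d))). lra.
Qed.

Lemma sum_shift_le h s K : (forall n, 0 <= h n) ->
  sum_f_R0 (fun i => h (i + s)%nat) K <= sum_f_R0 h (K + s).
Proof.
  intros Hp. induction K.
  - simpl. apply term_le_sum; auto.
  - replace (S K + s)%nat with (S (K + s)) by lia. simpl. lra.
Qed.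

Lemma zsum_shift g d N : (forall n, 0 <= g n) -> (-2 <= d <= 2)%Z ->
  zsum (fun n => g (n + d)%Z) N <= zsum g (N + 2).
Proof.
  intros Hp Hd. unfold zsum.
  set (h := fun j => g (Z.of_nat j - Z.of_nat (N + 2))%Z).
  rewrite (sum_eq _ (fun i => h (i + Z.to_nat (d + 2))%nat)).
  - eapply Rle_trans; [apply sum_shift_le; intros; apply Hp|].
    replace (2 * (N + 2))%nat with ((2 * N + Z.to_nat (d + 2)) + (4 - Z.to_nat (d+2)))%nat by lia.
    apply sum_mono. intros; apply Hp.
  - intros i _. unfold h. f_equal. lia.
Qed.

Lemma zsum_scal c g N : zsum (fun n => c * g n) N = c * zsum g N.
Proof. unfold zsum. rewrite scal_sum. apply sum_eq; intros; ring. Qed.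

Lemma zsum_le g h N : (forall n, g n <= h n) -> zsum g N <= zsum h N.
Proof. intros H; unfold zsum; apply sum_Rle; auto. Qed.

Lemma bound_W (T : op) : (forall f n, (T f (enum n))² <= 5 * W f n) ->
  forall f B, (forall N, psum2 f N <= B) -> forall N, psum2 (T f) N <= 25 * B.
Proof.
  intros HT f B HB N. unfold psum2.
  eapply Rle_trans; [apply zsum_le; intro n; apply HT|].
  rewrite zsum_scal. unfold W. rewrite !zsum_plus.
  pose proof (HB (N+2)%nat) as HB'. unfold psum2 in HB'.
  assert (Hp : forall n, 0 <= (f (enum n))²) by (intros; apply Rle_0_sqr).
  pose proof (zsum_shift _ (-2) N Hp ltac:(lia)).
  pose proof (zsum_shift _ (-1) N Hp ltac:(lia)).
  pose proof (zsum_shift _ 0 N Hp ltac:(lia)).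
  pose proof (zsum_shift _ 1 N Hp ltac:(lia)).
  pose proof (zsum_shift _ 2 N Hp ltac:(lia)).
  simpl in *. lra.
Qed.

Theorem mainTheorem8 :
  exists Lop Linv : op,
    (forall f, is_l2 f -> mx_acts Lmat f (Lop f)) /\
    bounded_op Lop /\
    bounded_op Linv /\
    (forall f, is_l2 f -> forall x, Lop (Linv f) x = f x /\ Linv (Lop f) x = f x) /\
    (forall f, is_l2 f ->
       exists g, mx_acts Dmat f g /\
                 mx_acts Dmat g (fun x => Lop f x - Linv f x)).
Proof.
  exists Lop, Linv. split; [|split; [|split; [|split]]].
  - intros f _. apply (mx_acts_ind _ nbrL); [apply Lmat_ind|reflexivity].
  - split.
    + intros f g a _ _ x. destruct x; unfold Lop; simpl; ring.
    + exists 25. split; [lra|]. apply bound_W. apply Lop_pt.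
  - split.
    + intros f g a _ _ x. destruct x; unfold Linv; simpl; ring.
    + exists 25. split; [lra|]. apply bound_W. apply Linv_pt.
  - intros f _ x. split; [apply LLinv|apply LinvL].
  - intros f _. exists (fun y => sumf (nbrD y) f). split.
    + apply (mx_acts_ind _ nbrD); [apply Dmat_ind|reflexivity].
    + apply (mx_acts_ind _ nbrD); [apply Dmat_ind|]. intros x. symmetry. apply DD.
Qed.
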